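(* Let $\kappa<0$, $m>0$, and let $L_{\kappa,m}$ be as in the context. Suppose $\delta\in(0,1)$ and $0<\rho_1<\rho_2<\min\{R_{|\kappa|},2m\delta/3\}$. Then with $\beta=\sqrt{1-\delta^2}$ and $A=\sin_\kappa(\rho_2)/\rho_2$, \[\frac{L_{\kappa,m}(\rho_2)}{L_{\kappa,m}(\rho_1)}\ge\frac12\left[\left(\frac{\rho_2}{A\rho_1}\right)^{\beta m}-\left(\frac{\rho_2}{A\rho_1}\right)^{-\beta m}\right].\]
   Context: For $\kappa<0$: $\sin_\kappa(\rho)=\sinh(\sqrt{-\kappa}\rho)/\sqrt{-\kappa}$, $\cos_\kappa=(\sin_\kappa)'$, and $R_{|\kappa|}=\pi/(2\sqrt{|\kappa|})$. $L_{\kappa,m}$ is a solution of \[\sin_\kappa^2(\rho)L''(\rho)+\sin_\kappa(\rho)\cos_\kappa(\rho)L'(\rho)+(\sin_\kappa^2(\rho)-m^2)L(\rho)=0\] that is well defined (regular) at $\rho=0$ and positive on some interval $(0,\varepsilon)$. *)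

(* Defs.v *)
From Stdlib Require Import Reals.
From Coquelicot Require Import Coquelicot.
Open Scope R_scope.

Definition sin_k (k r : R) : R := sinh (sqrt (- k) * r) / sqrt (- k).
Definition cos_k (k r : R) : R := Derive (sin_k k) r.
Definition R_abs (k : R) : R := PI / (2 * sqrt (Rabs k)).

Definition solves_L_ode (k m : R) (L : R -> R) : Prop :=
  forall r, 0 < r ->
    ex_derive L r /\ ex_derive (Derive L) r /\
    (sin_k k r)^2 * Derive_n L 2 r + sin_k k r * cos_k k r * Derive L r
      + ((sin_k k r)^2 - m^2) * L r = 0.

Definition regular_at_0 (L : R -> R) : Prop :=
  exists l : R, filterlim L (at_right 0) (locally l).

Definition positive_near_0 (L : R -> R) : Prop :=
  exists eps, 0 < eps /\ forall r, 0 < r < eps -> 0 < L r.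

Definition is_L_km (k m : R) (L : R -> R) : Prop :=
  solves_L_ode k m L /\ regular_at_0 L /\ positive_near_0 L.

(* Main.v *)
Require Import Defs.
From Stdlib Require Import Reals.
From Coquelicot Require Import Coquelicot.
From Stdlib Require Import Lra Lia Classical.
Open Scope R_scope.


Lemma mono (f df : R -> R) a b : a <= b ->
  (forall x, a <= x <= b -> is_derive f x (df x)) ->
  (forall x, a < x < b -> 0 <= df x) -> f a <= f b.
Proof.
  intros Hab Hd Hs. destruct (Req_dec a b) as [->|Hne]; [lra|].
  destruct (MVT_cor2 f df a b) as [c [Hc1 Hc2]]; [lra| |].
  - intros c Hc. apply is_derive_Reals. now apply Hd.
  - specialize (Hs c Hc2). nra.
Qed.

Lemma d_sinh x : is_derive sinh x (cosh x).
Proof. unfold sinh, cosh. auto_derive; auto. lra. Qed.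
Lemma d_cosh x : is_derive cosh x (sinh x).
Proof. unfold sinh, cosh. auto_derive; auto. lra. Qed.

Lemma exp_ge1 x : 0 <= x -> 1 <= exp x.
Proof. intros. rewrite <- exp_0. destruct H. left; now apply exp_increasing. subst; lra. Qed.

Lemma cosh_ge1 x : 1 <= cosh x.
Proof. unfold cosh. rewrite exp_Ropp. assert (H := exp_pos x).
  set (E := exp x) in *.
  replace ((E + / E) / 2) with (1 + (E-1)^2/(2*E)) by (field; lra).
  assert (0 <= (E-1)^2/(2*E)). { apply Rdiv_le_0_compat; [apply pow2_ge_0|lra]. } lra. Qed.

Lemma sinh_ge0 x : 0 <= x -> 0 <= sinh x.
Proof. intros. unfold sinh. rewrite exp_Ropp. assert (H1 := exp_ge1 x H).
  set (E := exp x) in *. assert (/E <= 1). { rewrite <- Rinv_1. apply Rinv_le_contravar; lra. } lra. Qed.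

Lemma sinh_pos x : 0 < x -> 0 < sinh x.
Proof. intros. rewrite <- sinh_0. now apply sinh_lt. Qed.

Lemma cosh_sinh x : cosh x ^ 2 - sinh x ^ 2 = 1.
Proof. unfold cosh, sinh. rewrite exp_Ropp. assert (H := exp_pos x).
  set (E := exp x) in *. field. lra. Qed.

Ltac exp_alg x := rewrite ?exp_Ropp; let H := fresh in assert (H := exp_pos x); set (E := exp x) in *.

(* tanh(u/2) <= u/2 *)
Lemma g_bound u : 0 <= u -> sinh u / (cosh u + 1) <= u / 2.
Proof.
  intros Hu.
  assert (H := mono (fun v => v/2 - sinh v / (cosh v + 1)) (fun v => /2 - /(cosh v + 1)) 0 u Hu).
  simpl in H. rewrite sinh_0, cosh_0 in H.
  assert (0 <= u / 2 - sinh u / (cosh u + 1)); [|lra].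
  eapply Rle_trans; [|apply H].
  - lra.
  - intros x _. assert (Hc := cosh_ge1 x). unfold cosh in Hc |- *. unfold sinh.
    auto_derive.
    + repeat split. lra.
    + exp_alg x. field. split; [lra|]. intro. assert (0 < E*E + 1 + 2 * E) by nra. 
      assert ((E + /E)/2 + 1 = (E*E+1+2*E)/(2*E)) by (field; lra). lra.
  - intros x _. assert (Hc := cosh_ge1 x).
    assert (/ (cosh x + 1) <= /2). apply Rinv_le_contravar; lra. lra.
Qed.

Lemma cosh_quad u : 0 <= u -> u^2/2 <= cosh u - 1.
Proof.
  intros Hu.
  assert (H1 : forall v, 0 <= v -> v <= sinh v).
  { intros v Hv. assert (H := mono (fun w => sinh w - w) (fun w => cosh w - 1) 0 v Hv).
    simpl in H. rewrite sinh_0 in H. assert (0 <= sinh v - v); [|lra].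
    replace 0 with (0 - 0) by lra. apply H.
    - intros x _. unfold cosh, sinh. auto_derive; auto. field.
    - intros x _. assert (H2 := cosh_ge1 x); lra. }
  assert (H := mono (fun w => cosh w - 1 - w^2/2) (fun w => sinh w - w) 0 u Hu).
  simpl in H. rewrite cosh_0 in H. assert (0 <= cosh u - 1 - u^2/2); [|lra].
  replace 0 with (1 - 1 - 0*(0*1)/2) by lra. apply H.
  - intros x _. unfold cosh, sinh. auto_derive; auto. field.
  - intros x Hx. assert (H2 := H1 x). lra.
Qed.

Lemma sinh_div_mono u v : 0 < u -> u <= v -> sinh u / u <= sinh v / v.
Proof.
  intros Hu Huv.
  assert (Hq : forall w, 0 <= w -> 0 <= w * cosh w - sinh w).
  { intros w Hw. assert (H := mono (fun z => z * cosh z - sinh z) (fun z => z * sinh z) 0 w Hw).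
    simpl in H. rewrite sinh_0 in H. replace 0 with (0 * cosh 0 - 0) by lra. apply H.
    - intros x _. unfold cosh, sinh. auto_derive; auto. field.
    - intros x Hx. assert (H2 := sinh_ge0 x). nra. }
  apply (mono (fun z => sinh z / z) (fun z => (z * cosh z - sinh z) / z^2)); auto.
  - intros x Hx. unfold cosh, sinh. auto_derive. lra. field. lra.
  - intros x Hx. apply Rdiv_le_0_compat. apply Hq; lra. nra.
Qed.

Lemma PI2_ub : PI / 2 < 16/10.
Proof.
  destruct (Rlt_or_le (PI/2) (16/10)) as [H|H]; auto. exfalso.
  destruct (cos_bound (16/10) 1) as [_ H2].
  - assert (PI > 0) by apply PI_RGT_0. lra.
  - lra.
  - assert (H3 := cos_ge_0 (16/10)). 
    assert (cos_approx (16/10) (2 * (1 + 1)) < 0).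
    { unfold cos_approx. cbn [sum_f_R0 Nat.mul Nat.add]. unfold cos_term. rewrite !INR_IZR_INZ.
      repeat match goal with |- context [Z.of_nat ?n] => let v := eval vm_compute in (Z.of_nat n) in change (Z.of_nat n) with v end.
      cbn [Nat.mul Nat.add pow]. lra. }
    assert (PI > 0) by apply PI_RGT_0. 
    assert (0 <= cos (16/10)) by (apply H3; lra). lra.
Qed.

Lemma exp_nat n x : exp (INR n * x) = exp x ^ n.
Proof. induction n. simpl. rewrite Rmult_0_l. apply exp_0.
  rewrite S_INR. replace ((INR n + 1) * x) with (INR n * x + x) by ring.
  rewrite exp_plus, IHn. simpl. ring. Qed.

Lemma exp_tenth : exp (1/10) <= 21/19.
Proof.
  assert (Hp' : forall y, 0 <= y -> (1 - y) * exp y - 1 <= 0).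
  { intros y Hy. assert (H := mono (fun z => 1 - (1 - z) * exp z) (fun z => z * exp z) 0 y Hy).
    simpl in H. rewrite exp_0 in H. assert (0 <= 1 - (1 - y) * exp y); [|lra].
    replace 0 with (1 - (1 - 0) * 1) by ring. apply H.
    - intros x _. auto_derive; auto. ring.
    - intros x Hx. assert (H2 := exp_pos x). nra. }
  assert (H := mono (fun z => (2 + z) - (2 - z) * exp z) (fun z => 1 - (1 - z) * exp z) 0 (1/10)).
  simpl in H. rewrite exp_0 in H.
  assert (0 <= 2 + 1/10 - (2 - 1/10) * exp (1/10)).
  { replace 0 with (2 + 0 - (2 - 0) * 1) by ring. apply H. lra.
    - intros x _. auto_derive; auto. ring.
    - intros x Hx. assert (H2 := Hp' x). lra. }
  lra.
Qed.

Lemma sinh_16 : sinh (16/10) <= 24/10.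
Proof.
  assert (HE : exp (16/10) <= (21/19)^16).
  { replace (16/10) with (INR 16 * (1/10)) by (simpl; lra). rewrite exp_nat.
    apply pow_incr. split. left; apply exp_pos. apply exp_tenth. }
  unfold sinh. rewrite exp_Ropp. assert (H1 := exp_ge1 (16/10)). 
  set (E := exp (16/10)) in *. set (q := (21/19)^16) in *.
  assert (/q <= /E) by (apply Rinv_le_contravar; lra).
  assert (q - /q <= 48/10). { unfold q. lra. }
  lra.
Qed.

Lemma sinh_lin u : 0 < u -> u < PI/2 -> sinh u <= 3/2 * u.
Proof.
  intros H1 H2. assert (H := sinh_div_mono u (16/10) H1). assert (H3 := PI2_ub).
  assert (H4 := sinh_16). assert (sinh u / u <= 3/2).
  { eapply Rle_trans. apply H. lra. apply Rmult_le_reg_r with (16/10). lra.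
    field_simplify. lra. }
  apply Rmult_le_reg_r with (/u). apply Rinv_0_lt_compat; lra.
  replace (3/2*u*/u) with (3/2) by (field; lra). exact H0.
Qed.

Lemma g2_bound x : 0 < x -> x^2 / (2 * sinh x) <= sinh x / (cosh x + 1).
Proof.
  intros Hx. assert (Hs := sinh_pos x Hx). assert (Hc := cosh_ge1 x).
  assert (Hq := cosh_quad x ltac:(lra)). assert (Hcs := cosh_sinh x).
  apply Rmult_le_reg_r with (2 * sinh x * (cosh x + 1)). nra.
  replace (x^2 / (2 * sinh x) * (2 * sinh x * (cosh x + 1))) with (x^2 * (cosh x + 1)) by (field; lra).
  replace (sinh x / (cosh x + 1) * (2 * sinh x * (cosh x + 1))) with (2 * sinh x ^ 2) by (field; lra).
  assert (x^2 <= 2 * (cosh x - 1)) by lra.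
  assert (x^2 * (cosh x + 1) <= 2 * (cosh x - 1) * (cosh x + 1)) by (apply Rmult_le_compat_r; lra).
  nra.
Qed.
Definition sf a r := sinh (a*r)/a.
Definition gf a r := sinh (a*r)/(cosh (a*r)+1).
Definition ef a b r := exp (b * ln (gf a r)).

Lemma d_sf a r : a <> 0 -> is_derive (sf a) r (cosh (a*r)).
Proof. intros. unfold sf, sinh, cosh. auto_derive. auto. field. auto. Qed.

Lemma sf_pos a r : 0 < a -> 0 < r -> 0 < sf a r.
Proof. intros. unfold sf. apply Rdiv_lt_0_compat; auto. apply sinh_pos. nra. Qed.

Lemma gf_pos a r : 0 < a -> 0 < r -> 0 < gf a r.
Proof. intros. unfold gf. apply Rdiv_lt_0_compat. apply sinh_pos. nra.
  assert (H1 := cosh_ge1 (a*r)). lra. Qed.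

Lemma ef_pos a b r : 0 < ef a b r.
Proof. apply exp_pos. Qed.

Lemma d_gf a r : is_derive (gf a) r (a / (cosh (a*r) + 1)).
Proof. assert (Hc := cosh_ge1 (a*r)). unfold gf. unfold cosh in Hc |- *. unfold sinh.
  auto_derive.
  + repeat split. lra.
  + exp_alg (a*r). field. split; [lra|]. intro. assert (0 < E*E + 1 + 2 * E) by nra.
    assert ((E + /E)/2 + 1 = (E*E+1+2*E)/(2*E)) by (field; lra). lra.
Qed.

Lemma d_ef a b r : 0 < a -> 0 < r -> is_derive (ef a b) r (b * ef a b r / sf a r).
Proof.
  intros Ha Hr. assert (Hg := gf_pos a r Ha Hr). assert (Hs := sinh_pos (a*r) ltac:(nra)).
  assert (Hc := cosh_ge1 (a*r)).
  unfold ef. auto_derive.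
  - split; [|split; auto]. exists (a / (cosh (a*r) + 1)). apply d_gf.
  - replace (Derive (fun x => gf a x) r) with (a/(cosh(a*r)+1)) by (symmetry; apply is_derive_unique; apply d_gf).
    unfold gf in *; unfold sf. field.
    repeat split; try lra.
Qed.

Definition Wf a b L r := ef a b r * (sf a r * Derive L r - b * L r).

Lemma d_W a b m (L : R -> R) r : 0 < a -> 0 < r -> ex_derive L r -> ex_derive (Derive L) r ->
  (sf a r)^2 * Derive (Derive L) r + sf a r * cosh (a*r) * Derive L r + ((sf a r)^2 - m^2) * L r = 0 ->
  is_derive (Wf a b L) r (ef a b r * L r * (m^2 - (sf a r)^2 - b^2) / sf a r).
Proof.
  intros Ha Hr HL HD Hode. assert (Hs := sf_pos a r Ha Hr).
  unfold Wf. auto_derive.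
  - repeat split; auto. exists (b * ef a b r / sf a r). now apply d_ef.
    exists (cosh (a*r)). apply d_sf. lra.
  - replace (Derive (fun x => ef a b x) r) with (b * ef a b r / sf a r) by (symmetry; apply is_derive_unique; now apply d_ef).
    replace (Derive (fun x => sf a x) r) with (cosh (a*r)) by (symmetry; apply is_derive_unique; apply d_sf; lra).
    replace (Derive (fun x => Derive L x) r) with (Derive (Derive L) r) by reflexivity.
    replace (Derive (fun x => L x) r) with (Derive L r) by reflexivity.
    replace (Derive (Derive L) r) with (- (sf a r * cosh (a*r) * Derive L r + ((sf a r)^2 - m^2) * L r) / (sf a r)^2)
      by (apply Rmult_eq_reg_l with ((sf a r)^2); [|apply pow_nonzero; lra];
          replace ((sf a r)^2 * (- (sf a r * cosh (a*r) * Derive L r + ((sf a r)^2 - m^2) * L r) / (sf a r)^2))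
           with (- (sf a r * cosh (a*r) * Derive L r + ((sf a r)^2 - m^2) * L r)) by (field; lra); lra).
    field. lra.
Qed.

Lemma d_Q a b (L : R -> R) r : 0 < a -> 0 < r -> ex_derive L r ->
  is_derive (fun x => L x / ef a b x) r (Wf a b L r / (sf a r * (ef a b r)^2)).
Proof.
  intros Ha Hr HL. assert (Hs := sf_pos a r Ha Hr). assert (He := ef_pos a b r).
  auto_derive.
  - repeat split; auto. exists (b * ef a b r / sf a r). now apply d_ef. lra.
  - replace (Derive (fun x => ef a b x) r) with (b * ef a b r / sf a r) by (symmetry; apply is_derive_unique; now apply d_ef).
    change (Derive (fun x => L x) r) with (Derive L r). unfold Wf.
    apply (f_equal (fun z : R => z)) || idtac. field. lra.
Qed.

Lemma d_F a b K (L : R -> R) r : 0 < a -> 0 < r -> ex_derive L r ->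
  is_derive (fun x => K / ef a b x - L x) r (- (K * b / (sf a r * ef a b r)) - Derive L r).
Proof.
  intros Ha Hr HL. assert (Hs := sf_pos a r Ha Hr). assert (He := ef_pos a b r).
  auto_derive.
  - repeat split; auto. exists (b * ef a b r / sf a r). now apply d_ef. lra.
  - replace (Derive (fun x => ef a b x) r) with (b * ef a b r / sf a r) by (symmetry; apply is_derive_unique; now apply d_ef).
    change (Derive (fun x => L x) r) with (Derive L r). field. lra.
Qed.

Lemma exp_le x y : x <= y -> exp x <= exp y.
Proof. intros [H|H]. left; now apply exp_increasing. subst; lra. Qed.

Lemma ef_small a b eta : 0 < a -> 0 < b -> 0 < eta ->
  exists rs, 0 < rs /\ forall r, 0 < r <= rs -> ef a b r <= eta.
Proof.
  intros Ha Hb He. exists (2 / a * exp (ln eta / b)). split.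
  { apply Rmult_lt_0_compat. apply Rdiv_lt_0_compat; lra. apply exp_pos. }
  intros r [Hr1 Hr2]. unfold ef. rewrite <- (exp_ln eta He). apply exp_le.
  assert (Hg := gf_pos a r Ha Hr1). assert (Hgb := g_bound (a*r) ltac:(nra)).
  change (sinh (a*r) / (cosh (a*r) + 1)) with (gf a r) in Hgb.
  assert (ln (gf a r) <= ln eta / b).
  { rewrite <- (ln_exp (ln eta / b)). apply ln_le; auto.
    apply Rle_trans with (a * r / 2); auto.
    apply Rmult_le_compat_l with (r := a) in Hr2; [|lra].
    replace (a * (2 / a * exp (ln eta / b))) with (2 * exp (ln eta / b)) in Hr2 by (field; lra). lra. }
  apply Rmult_le_compat_l with (r := b) in H; [|lra].
  replace (b * (ln eta / b)) with (ln eta) in H by (field; lra). lra.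
Qed.

Lemma reg_bound (L : R -> R) l : filterlim L (at_right 0) (locally l) ->
  exists d, 0 < d /\ forall y, 0 < y < d -> Rabs (L y - l) < 1.
Proof.
intros H. apply filterlim_locally with (eps := mkposreal 1 Rlt_0_1) in H.
destruct H as [d Hd]. exists d. split. apply cond_pos. intros y Hy. apply Hd.
unfold ball; simpl. unfold AbsRing_ball, abs, minus, plus, opp; simpl.
rewrite Ropp_0, Rplus_0_r, Rabs_right; lra. lra. Qed.

Lemma cont_pos (L : R -> R) z : ex_derive L z -> 0 < L z ->
  exists d, 0 < d /\ forall y, Rabs (y - z) < d -> 0 < L y.
Proof.
  intros HD Hz. assert (Hc : continuity_pt L z).
  { apply continuity_pt_filterlim. apply ex_derive_continuous in HD. exact HD. }
  destruct (Hc (L z) Hz) as [d [Hd Hy]]. exists d. split; auto.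
  intros y Hyz. destruct (Req_dec y z) as [->|Hne]; auto.
  assert (H := Hy y). unfold R_dist in H. simpl in H. unfold R_dist in H.
  assert (Rabs (L y - L z) < L z). { apply H. split; auto. unfold D_x, no_cond. split; auto. }
  apply Rabs_def2 in H0. lra.
Qed.
Theorem mainTheorem5 (k m delta rho1 rho2 : R) (L : R -> R) :
  k < 0 -> 0 < m -> is_L_km k m L ->
  0 < delta < 1 ->
  0 < rho1 -> rho1 < rho2 -> rho2 < Rmin (R_abs k) (2 * m * delta / 3) ->
  let beta := sqrt (1 - delta ^ 2) in
  let A := sin_k k rho2 / rho2 in
  L rho2 / L rho1 >=
    / 2 * (Rpower (rho2 / (A * rho1)) (beta * m)
           - Rpower (rho2 / (A * rho1)) (- (beta * m))).
Proof.
  intros Hk Hm [Hode [[l Hl] [eps [Heps Hpos]]]] [Hd1 Hd2] Hr1 Hr12 Hr2 beta A.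
  set (a := sqrt (- k)).
  assert (Ha : 0 < a) by (apply sqrt_lt_R0; lra).
  assert (Hsin : forall r, sin_k k r = sf a r) by reflexivity.
  assert (Hcos : forall r, cos_k k r = cosh (a * r)).
  { intro r. unfold cos_k. apply is_derive_unique. change (sin_k k) with (sf a). apply d_sf. lra. }
  set (b := beta * m).
  assert (Hbeta : 0 < beta) by (apply sqrt_lt_R0; nra).
  assert (Hb : 0 < b) by (unfold b; nra).
  assert (Hb2 : b^2 = (1 - delta^2) * m^2).
  { unfold b, beta. rewrite Rpow_mult_distr. rewrite pow2_sqrt; nra. }
  assert (HPI : a * rho2 < PI / 2).
  { assert (H : rho2 < R_abs k) by (eapply Rlt_le_trans; [exact Hr2| apply Rmin_l]). unfold R_abs in H.
    rewrite Rabs_left in H by lra. fold a in H.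
    assert (rho2 < PI / (2 * a)) by lra.
    apply Rmult_lt_compat_l with (r := a) in H0; auto.
    replace (a * (PI / (2 * a))) with (PI / 2) in H0 by (field; lra). lra. }
  assert (Hrho2m : rho2 < 2 * m * delta / 3).
  { assert (H := Rmin_r (R_abs k) (2 * m * delta / 3)). lra. }
  assert (Hsgn : forall r, 0 < r <= rho2 -> 0 <= m^2 - (sf a r)^2 - b^2).
  { intros r Hr. assert (Hs := sf_pos a r Ha (proj1 Hr)).
    assert (H := sinh_lin (a * r) ltac:(nra) ltac:(nra)).
    assert (sf a r <= 3/2 * r).
    { unfold sf. apply Rmult_le_reg_r with a; auto. replace (sinh (a * r) / a * a) with (sinh (a*r)) by (field; lra). lra. }
    assert (sf a r < m * delta) by lra. rewrite Hb2. nra. }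
  assert (HODE : forall r, 0 < r -> ex_derive L r /\ ex_derive (Derive L) r /\
     (sf a r)^2 * Derive (Derive L) r + sf a r * cosh (a*r) * Derive L r + ((sf a r)^2 - m^2) * L r = 0).
  { intros r Hr. destruct (Hode r Hr) as [H1 [H2 H3]]. rewrite Hcos in H3. repeat split; auto. }
  set (W := Wf a b L).
  assert (HdW : forall r, 0 < r -> is_derive W r (ef a b r * L r * (m^2 - (sf a r)^2 - b^2) / sf a r)).
  { intros r Hr. destruct (HODE r Hr) as [H1 [H2 H3]]. now apply d_W. }
  assert (HWs : forall r, 0 < r <= rho2 -> 0 <= L r -> 0 <= ef a b r * L r * (m^2 - (sf a r)^2 - b^2) / sf a r).
  { intros r Hr HL. apply Rdiv_le_0_compat. apply Rmult_le_pos. apply Rmult_le_pos; auto. left; apply ef_pos.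
    now apply Hsgn. apply sf_pos; lra. }
  assert (Hmin : 0 < Rmin eps rho1) by (apply Rmin_pos; lra).
  set (r0 := Rmin eps rho1 / 2).
  assert (Hr0 : 0 < r0 /\ r0 < eps /\ r0 < rho1).
  { unfold r0. assert (H1 := Rmin_l eps rho1). assert (H2 := Rmin_r eps rho1). lra. }
  assert (HW0 : 0 <= W r0).
  { destruct (Rle_or_lt 0 (W r0)) as [H|H]; auto. exfalso.
    set (c := - W r0). assert (Hc : 0 < c) by (unfold c; lra).
    destruct (reg_bound L l Hl) as [d1 [Hd1' Hreg]].
    set (M := Rabs l + 1).
    assert (HM : forall y, 0 < y < d1 -> L y <= M).
    { intros y Hy. specialize (Hreg y Hy). apply Rabs_def2 in Hreg. unfold M.
      assert (H1 := Rle_abs l). lra. }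
    assert (HMp : 0 < M) by (unfold M; assert (H1 := Rabs_pos l); lra).
    assert (HWle : forall r, 0 < r <= r0 -> W r <= - c).
    { intros r Hr. unfold c. rewrite Ropp_involutive.
      apply (mono W (fun x => ef a b x * L x * (m^2 - (sf a x)^2 - b^2) / sf a x)). lra.
      - intros x Hx. apply HdW. lra.
      - intros x Hx. apply HWs. lra. left. apply Hpos. lra. }
    set (K := c / (2*b)).
    destruct (ef_small a b (c / (2*b*M)) Ha Hb) as [rs [Hrs Hsm]].
    { apply Rdiv_lt_0_compat; auto. nra. }
    set (r3 := Rmin r0 (Rmin (d1/2) rs)).
    assert (Hr3 : 0 < r3 /\ r3 <= r0 /\ r3 < d1 /\ r3 <= rs).
    { unfold r3. assert (H1 := Rmin_l r0 (Rmin (d1/2) rs)). assert (H2 := Rmin_r r0 (Rmin (d1/2) rs)).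
      assert (H3 := Rmin_l (d1/2) rs). assert (H4 := Rmin_r (d1/2) rs).
      assert (0 < Rmin r0 (Rmin (d1/2) rs)). { apply Rmin_pos. lra. apply Rmin_pos; lra. }
      lra. }
    assert (HF : forall r, 0 < r <= r3 -> K / ef a b r - L r <= K / ef a b r3 - L r3).
    { intros r Hr. apply (mono (fun x => K / ef a b x - L x) (fun x => - (K*b/(sf a x * ef a b x)) - Derive L x)). lra.
      - intros x Hx. apply d_F; try lra. apply HODE; lra.
      - intros x Hx.
        assert (HWx := HWle x ltac:(lra)). unfold W, Wf in HWx.
        assert (Hex := Hsm x ltac:(lra)).
        assert (HLx := HM x ltac:(lra)). assert (HLp := Hpos x ltac:(lra)).
        assert (Hsx := sf_pos a x Ha ltac:(lra)). assert (Hefx := ef_pos a b x).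
        set (e := ef a b x) in *. set (sx := sf a x) in *. set (D := Derive L x) in *.
        assert (H2 : e * (2 * b * M) <= c).
        { apply Rmult_le_compat_r with (r := 2*b*M) in Hex; [|nra].
          replace (c / (2 * b * M) * (2 * b * M)) with c in Hex by (field; lra). lra. }
        assert (H3 : e * b * L x <= e * b * M).
        { apply Rmult_le_compat_l; [nra|lra]. }
        replace (- (K * b / (sx * e)) - D) with ((- c / 2 - e * (sx * D)) / (sx * e)) by (unfold K; field; lra).
        apply Rdiv_le_0_compat; [|nra]. nra. }
    assert (HK : 0 < K) by (unfold K; apply Rdiv_lt_0_compat; lra).
    assert (He3 := ef_pos a b r3).
    assert (HKM : 0 < M + K / ef a b r3) by (assert (0 < K / ef a b r3) by (apply Rdiv_lt_0_compat; lra); lra).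
    destruct (ef_small a b (K / (M + K / ef a b r3)) Ha Hb) as [rs2 [Hrs2 Hsm2]].
    { apply Rdiv_lt_0_compat; lra. }
    set (r := Rmin r3 rs2).
    assert (Hr : 0 < r /\ r <= r3 /\ r <= rs2).
    { unfold r. assert (H1 := Rmin_l r3 rs2). assert (H2 := Rmin_r r3 rs2).
      assert (0 < Rmin r3 rs2) by (apply Rmin_pos; lra). lra. }
    assert (HFr := HF r ltac:(lra)).
    assert (HL3 := Hpos r3 ltac:(lra)).
    assert (HMr := HM r ltac:(lra)).
    assert (Her := Hsm2 r ltac:(lra)). assert (Her' := ef_pos a b r).
    assert (K / ef a b r >= M + K / ef a b r3).
    { apply Rle_ge. replace (M + K / ef a b r3) with (K / (K / (M + K / ef a b r3))) by (field; repeat split; try lra; nra).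
      unfold Rdiv at 1 3. apply Rmult_le_compat_l; [lra|]. apply Rinv_le_contravar; auto. }
    lra. }
  assert (KEYW : forall y, r0 <= y <= rho2 -> (forall z, r0 < z < y -> 0 <= L z) -> 0 <= W y).
  { intros y Hy HLz. apply Rle_trans with (W r0); auto.
    apply (mono W (fun x => ef a b x * L x * (m^2 - (sf a x)^2 - b^2) / sf a x)). lra.
    - intros x Hx. apply HdW. lra.
    - intros x Hx. apply HWs. lra. apply HLz. lra. }
  assert (KEY : forall y, r0 <= y <= rho2 -> (forall z, r0 < z < y -> 0 < L z) -> 0 < L y).
  { intros y Hy HLz. apply Rlt_le_trans with (L r0). apply Hpos; lra.
    apply (mono L (Derive L)). lra.
    - intros x Hx. apply Derive_correct. apply HODE. lra.
    - intros x Hx. assert (HWx : 0 <= W x).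
      { apply KEYW. lra. intros z Hz. left. apply HLz. lra. }
      unfold W, Wf in HWx. assert (He := ef_pos a b x). assert (Hs := sf_pos a x Ha ltac:(lra)).
      assert (HLx := HLz x Hx).
      assert (0 <= sf a x * Derive L x - b * L x).
      { apply Rmult_le_reg_l with (ef a b x); auto. lra. }
      assert (0 < sf a x * Derive L x) by nra. nra. }
  set (E := fun x => 0 < x <= rho2 /\ forall y, 0 < y <= x -> 0 < L y).
  destruct (completeness E) as [z [Hub Hlub]].
  { exists rho2. intros x [Hx _]. lra. }
  { exists r0. split. lra. intros y Hy. apply Hpos. lra. }
  assert (Hz1 : r0 <= z). { apply Hub. split. lra. intros y Hy. apply Hpos. lra. }
  assert (Hz2 : z <= rho2). { apply Hlub. intros x [Hx _]. lra. }
  assert (Hbelow : forall y, 0 < y < z -> 0 < L y).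
  { intros y Hy. destruct (classic (0 < L y)) as [H|H]; auto. exfalso.
    assert (z <= y). { apply Hlub. intros x [Hx1 Hx2]. destruct (Rle_or_lt x y) as [H1|H1]; auto.
      exfalso. apply H. apply Hx2. lra. }
    lra. }
  assert (HLz : 0 < L z). { apply KEY. lra. intros z' Hz'. apply Hbelow. lra. }
  assert (Hzr : z = rho2).
  { destruct (Req_dec z rho2) as [H|H]; auto. exfalso.
    destruct (cont_pos L z) as [d [Hd Hdz]]; auto. apply HODE; lra.
    set (x' := Rmin (z + d/2) rho2).
    assert (Hx' : z < x' /\ x' <= rho2 /\ x' <= z + d/2).
    { unfold x'. assert (H1 := Rmin_l (z + d/2) rho2). assert (H2 := Rmin_r (z + d/2) rho2).
      split; [|lra]. apply Rmin_glb_lt; lra. }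
    assert (E x').
    { split. lra. intros y Hy. destruct (Rlt_or_le y z) as [H1|H1]. apply Hbelow; lra.
      apply Hdz. rewrite Rabs_right; lra. }
    assert (x' <= z) by (apply Hub; auto). lra. }
  subst z.
  assert (HLpos : forall y, 0 < y <= rho2 -> 0 < L y).
  { intros y Hy. destruct (Req_dec y rho2) as [->|H]; auto. apply Hbelow. lra. }
  assert (HQ : L rho1 / ef a b rho1 <= L rho2 / ef a b rho2).
  { apply (mono (fun x => L x / ef a b x) (fun x => W x / (sf a x * (ef a b x)^2))). lra.
    - intros x Hx. apply d_Q; try lra. apply HODE; lra.
    - intros x Hx. apply Rdiv_le_0_compat.
      + apply KEYW. lra. intros z Hz. left. apply HLpos. lra.
      + assert (He := ef_pos a b x). assert (Hs := sf_pos a x Ha ltac:(lra)). 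
        apply Rmult_lt_0_compat; auto. apply pow_lt; auto. }
  assert (HL1 := HLpos rho1 ltac:(lra)). assert (HL2 := HLpos rho2 ltac:(lra)).
  assert (He1 := ef_pos a b rho1). assert (He2 := ef_pos a b rho2).
  assert (F1 : ef a b rho2 / ef a b rho1 <= L rho2 / L rho1).
  { replace (L rho2 / L rho1) with ((L rho2 / ef a b rho2) * (ef a b rho2 / L rho1)) by (field; lra).
    replace (ef a b rho2 / ef a b rho1) with ((L rho1 / ef a b rho1) * (ef a b rho2 / L rho1)) by (field; lra).
    apply Rmult_le_compat_r; auto. left. apply Rdiv_lt_0_compat; auto. }
  assert (Hg1 := gf_pos a rho1 Ha Hr1). assert (Hg2 := gf_pos a rho2 Ha ltac:(lra)).
  assert (F2 : ef a b rho2 / ef a b rho1 = exp (b * (ln (gf a rho2) - ln (gf a rho1)))).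
  { unfold ef. replace (b * ln (gf a rho2)) with (b * (ln (gf a rho2) - ln (gf a rho1)) + b * ln (gf a rho1)) by ring.
    rewrite exp_plus. field. apply Rgt_not_eq, exp_pos. }
  set (X := rho2 / (A * rho1)).
  assert (HsX := sinh_pos (a * rho2) ltac:(nra)).
  assert (HX : X = (a*rho2)^2 / (sinh (a*rho2) * (a*rho1))).
  { unfold X, A. rewrite Hsin. unfold sf. field. repeat split; lra. }
  assert (HXp : 0 < X). { rewrite HX. apply Rdiv_lt_0_compat. apply pow_lt; nra. apply Rmult_lt_0_compat; nra. }
  assert (F3 : X <= gf a rho2 / gf a rho1).
  { assert (G1 := g_bound (a*rho1) ltac:(nra)). change (sinh (a*rho1) / (cosh (a*rho1) + 1)) with (gf a rho1) in G1.
    assert (G2 := g2_bound (a*rho2) ltac:(nra)). change (sinh (a*rho2) / (cosh (a*rho2) + 1)) with (gf a rho2) in G2.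
    apply Rmult_le_reg_r with (gf a rho1); auto.
    replace (gf a rho2 / gf a rho1 * gf a rho1) with (gf a rho2) by (field; lra).
    apply Rle_trans with (X * (a * rho1 / 2)). apply Rmult_le_compat_l; lra.
    replace (X * (a * rho1 / 2)) with ((a * rho2) ^ 2 / (2 * sinh (a * rho2))). auto.
    rewrite HX. field. split; nra. }
  assert (F4 : ln X <= ln (gf a rho2) - ln (gf a rho1)).
  { rewrite <- ln_div; auto. apply ln_le; auto. }
  assert (F5 : Rpower X b <= exp (b * (ln (gf a rho2) - ln (gf a rho1)))).
  { unfold Rpower. apply exp_le. apply Rmult_le_compat_l; lra. }
  assert (F6 : 0 < Rpower X (- b)) by (unfold Rpower; apply exp_pos).
  assert (F7 : 0 < Rpower X b) by (unfold Rpower; apply exp_pos).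
  fold b. fold X. apply Rle_ge. lra.
Qed.
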